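(* Let $U$ be an $M\times M$ unitary, let $\mathrm{in}=(s_1,\dots,s_N)$ be distinct input modes each containing one photon, and let $P(t)$ be the ideal boson-sampling output distribution and $P_a(t)$ the distinguishable-particle distribution (defined in the context). Then $$\epsilon:=\tfrac12\sum_t|P(t)-P_a(t)|\le\frac12\sum_{(j_1,\dots,j_N)\in[M]^N}\ \sum_{\rho\in S_N\setminus\{\mathrm{Id}\}}\ \prod_{i=1}^N|U_{j_i,s_i}|\,|U_{j_i,s_{\rho(i)}}|=\frac12\sum_{\emptyset\neq\mathcal I_C\subseteq[N]}\ \sum_{\substack{\rho:\ \rho(i)\neq i\ \forall i\in\mathcal I_C\\ \rho(i)=i\ \forall i\notin\mathcal I_C}}\ \sum_{(j_1,\dots,j_N)}\prod_{i}|U_{j_i,s_i}||U_{j_i,s_{\rho(i)}}|,$$ and in particular $\epsilon\le\frac12\sum_{\emptyset\ne\mathcal I_C\subseteq[N]}\prod_{i\in\mathcal I_C}C_i$, where $C_i=\sum_{j=1}^M\sum_{l\neq i}|U_{j,s_i}||U_{j,s_l}|$.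
   Context: Output patterns are tuples $t=(t_1,\dots,t_M)$ of nonnegative integers summing to $N$, with $t!=\prod_it_i!$ and $\mathrm{out}$ the list of $N$ modes in which photons are detected (mode $m$ repeated $t_m$ times). The ideal probability is $P(t)=\frac1{t!}\big|\sum_{\sigma\in S_N}\prod_{j=1}^NU_{\mathrm{out}_{\sigma(j)},s_j}\big|^2$ and the distinguishable-particle probability is $P_a(t)=\frac1{t!}\sum_{\sigma\in S_N}\prod_{j=1}^N|U_{\mathrm{out}_{\sigma(j)},s_j}|^2$, which is the distribution of the occupation pattern obtained by independently sampling, for each $j$, a mode $m$ with probability $|U_{m,s_j}|^2$. *)

(* Defs.v *)
(* Complex amplitudes live in an arbitrary numClosedFieldType C
   (e.g. algC); norms `|z| are real elements of C, compared with the order of C. *)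
From mathcomp Require Import all_boot all_order all_algebra all_fingroup.
Set Implicit Arguments. Unset Strict Implicit. Unset Printing Implicit Defensive.
Import Order.TTheory GRing.Theory Num.Theory.
Local Open Scope ring_scope.

Section BosonSampling.
Variables (C : numClosedFieldType) (M N : nat).

Definition unitary (U : 'M[C]_M) : Prop :=
  U *m (map_mx Num.conj U)^T = 1%:M.

Definition pattern := {ffun 'I_M -> 'I_N.+1}.
Definition is_pattern (t : pattern) : bool := (\sum_(m < M) (t m : nat) == N)%N.

Definition tfact (t : pattern) : nat := (\prod_(m < M) (t m)`!)%N.

Definition out_seq (t : pattern) : seq 'I_M :=
  flatten [seq nseq (t m) m | m <- enum 'I_M].

(* out_k, k : 'I_N; the default (s k) is never used when t is a pattern *)
Definition out (s : 'I_N -> 'I_M) (t : pattern) (k : 'I_N) : 'I_M :=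
  nth (s k) (out_seq t) k.

Definition Pideal (U : 'M[C]_M) (s : 'I_N -> 'I_M) (t : pattern) : C :=
  ((tfact t)%:R)^-1 *
  `| \sum_(sigma : 'S_N) \prod_(j < N) U (out s t (sigma j)) (s j) | ^+ 2.

Definition Pdist (U : 'M[C]_M) (s : 'I_N -> 'I_M) (t : pattern) : C :=
  ((tfact t)%:R)^-1 *
  \sum_(sigma : 'S_N) \prod_(j < N) `| U (out s t (sigma j)) (s j) | ^+ 2.

Definition tvd (U : 'M[C]_M) (s : 'I_N -> 'I_M) : C :=
  2^-1 * \sum_(t : pattern | is_pattern t) `| Pideal U s t - Pdist U s t |.

Definition Ccoef (U : 'M[C]_M) (s : 'I_N -> 'I_M) (i : 'I_N) : C :=
  \sum_(j < M) \sum_(l < N | l != i) `| U j (s i) | * `| U j (s l) |.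

End BosonSampling.

(* Main.v *)
Require Import Defs.
From mathcomp Require Import all_boot all_order all_algebra all_fingroup.
Import Order.TTheory GRing.Theory Num.Theory.
Local Open Scope ring_scope.
Set Implicit Arguments. Unset Strict Implicit. Unset Printing Implicit Defensive.
Local Close Scope ring_scope.

Definition cntf (n : nat) (T : finType) (g : 'I_n -> T) (m : T) : nat :=
  \sum_(i < n) (g i == m).

Lemma cntf_lift n (T : finType) (g : 'I_n.+1 -> T) j m :
  cntf g m = (g j == m) + cntf (fun k => g (lift j k)) m.
Proof. by rewrite /cntf (bigD1_ord j). Qed.

Lemma forall_lift n (P : pred 'I_n.+1) i0 :
  [forall i, P i] = P i0 && [forall k, P (lift i0 k)].
Proof.
apply/forallP/andP => [H|[H1 /forallP H2] i]; first by split => //; apply/forallP.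
by case: (unliftP i0 i) => [k|] ->.
Qed.

Lemma reindex_lift_perm n i0 j0 (F : 'S_n.+1 -> nat) :
  \sum_(s : 'S_n.+1 | s i0 == j0) F s = \sum_(s : 'S_n) F (lift_perm i0 j0 s).
Proof.
rewrite (reindex (lift_perm i0 j0)); last first.
  pose ulsf i (s : 'S_n.+1) k := odflt k (unlift (s i) (s (lift i k))).
  have ulsfK i (s : 'S_n.+1) k: lift (s i) (ulsf i s k) = s (lift i k).
    rewrite /ulsf; have:= neq_lift i k.
    by rewrite -(can_eq (permK s)) => /unlift_some[] ? ? ->.
  have inj_ulsf: injective (ulsf i0 _).
    move=> s; apply: can_inj (ulsf (s i0) s^-1%g) _ => k'.
    by rewrite {1}/ulsf ulsfK !permK liftK.
  exists (fun s => perm (inj_ulsf s)) => [s _ | s].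
    by apply/permP=> k'; rewrite permE /ulsf lift_perm_lift lift_perm_id liftK.
  move/(s _ =P _) => si0; apply/permP=> k.
  case: (unliftP i0 k) => [k'|] ->; rewrite ?lift_perm_id //.
  by rewrite lift_perm_lift -si0 permE ulsfK.
by apply: eq_bigl => s; rewrite lift_perm_id eqxx.
Qed.

Lemma perm_count (T : finType) n (g h : 'I_n -> T) :
  \sum_(s : 'S_n | [forall i, g (s i) == h i]) 1 =
  if [forall m, cntf g m == cntf h m] then \prod_m (cntf h m)`! else 0.
Proof.
elim: n g h => [|n IH] g h.
  have -> : [forall m, cntf g m == cntf h m].
    by apply/forallP => m; rewrite /cntf !big_ord0.
  rewrite [RHS]big1; last by move=> m' _; rewrite /cntf big_ord0.
  rewrite (eq_bigl predT); last by move=> s; apply/forallP => -[].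
  by rewrite sum1_card card_Sn.
rewrite (partition_big (fun s : 'S_n.+1 => s ord0) predT) //=.
under eq_bigr => j0 _.
  rewrite big_mkcondl reindex_lift_perm.
  under eq_bigr => s _.
    rewrite (forall_lift _ ord0) lift_perm_id.
    under eq_forallb => k do rewrite lift_perm_lift.
    over.
  over.
simpl.
set P := \prod_m (cntf (fun k => h (lift ord0 k)) m)`!.
have E0 j0 : \sum_(s : 'S_n) (if (g j0 == h ord0) && [forall k, g (lift j0 (s k)) == h (lift ord0 k)] then 1 else 0) = (g j0 == h ord0) * (if [forall m, cntf g m == cntf h m] then P else 0).
  transitivity ((g j0 == h ord0) * \sum_(s : 'S_n | [forall k, g (lift j0 (s k)) == h (lift ord0 k)]) 1).
    rewrite [in RHS]big_mkcond big_distrr /=; apply: eq_bigr => s _.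
    by case: (g j0 == h ord0); rewrite /= ?mul1n ?mul0n.
  rewrite (IH (fun k => g (lift j0 k)) (fun k => h (lift ord0 k))).
  case: eqP => // e; rewrite /= !mul1n; congr (if _ then _ else _).
  apply: eq_forallb => m. rewrite (cntf_lift g j0) (cntf_lift h ord0) e eqn_add2l. reflexivity.
rewrite (eq_bigr _ (fun j0 _ => E0 j0)) -big_distrl /=.
case: ifP => [/forallP c|]; last by rewrite muln0.
rewrite -/(cntf g (h ord0)) (eqP (c _)) (cntf_lift h ord0) eqxx /P.
rewrite [RHS](bigD1 (h ord0)) //= [in X in _ = _ * X](eq_bigr (fun m => (cntf (fun k => h (lift ord0 k)) m)`!)); last first.
  by move=> m hm; rewrite (cntf_lift h ord0 m) eq_sym (negbTE hm).
by rewrite [X in _ * X](bigD1 (h ord0)) //= (cntf_lift h ord0 (h ord0)) eqxx mulnA add1n -factS.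
Qed.

Section Pat.
Variables (M N : nat).

Lemma size_out_seq (t : pattern M N) : is_pattern t -> size (out_seq t) = N.
Proof.
move=> /eqP ht; rewrite /out_seq size_flatten /shape -map_comp sumnE big_map.
by rewrite big_enum /= -[X in _ = X]ht; apply: eq_bigr => m _; rewrite /= size_nseq.
Qed.

Lemma count_out_seq (t : pattern M N) m : count (pred1 m) (out_seq t) = t m.
Proof.
rewrite /out_seq count_flatten -map_comp sumnE big_map big_enum /=.
rewrite (bigD1 m) //= count_nseq /= eqxx mul1n big1 ?addn0 // => m' hm'.
by rewrite count_nseq /= (negbTE hm').
Qed.

Lemma cnt_out (s : 'I_N -> 'I_M) (t : pattern M N) m :
  is_pattern t -> cntf (out s t) m = t m.
Proof.
move=> ht; rewrite -count_out_seq -sum1_count big_mkcond /=.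
rewrite (big_nth m) size_out_seq // big_mkord /cntf.
apply: eq_bigr => k _; rewrite /out (set_nth_default m) ?size_out_seq //.
Qed.

End Pat.

Local Open Scope ring_scope.

Lemma cntf_le n (T : finType) (g : 'I_n -> T) m : (cntf g m <= n)%N.
Proof.
rewrite /cntf -[X in (_ <= X)%N]card_ord -sum1_card.
by apply: leq_sum => i _; case: (_ == _).
Qed.

Lemma sum_cntf n (T : finType) (g : 'I_n -> T) : (\sum_m cntf g m = n)%N.
Proof.
rewrite /cntf exchange_big /= -[RHS]card_ord -sum1_card.
apply: eq_bigr => i _; rewrite (bigD1 (g i)) //= eqxx big1 // => m hm.
by rewrite eq_sym (negbTE hm).
Qed.

Section Main.
Variables (C : numClosedFieldType) (M N : nat).

Definition t0 (j : {ffun 'I_N -> 'I_M}) : pattern M N :=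
  [ffun m => inord (cntf j m)].

Lemma t0P (j : {ffun 'I_N -> 'I_M}) (t : pattern M N) :
  (is_pattern t && [forall m, cntf j m == t m]) = (t == t0 j).
Proof.
apply/andP/eqP => [[_ /forallP H]|->].
  apply/ffunP => m; rewrite ffunE; apply: val_inj => /=.
  by rewrite inordK ?ltnS ?cntf_le // (eqP (H m)).
have E m : (t0 j m : nat) = cntf j m.
  by rewrite ffunE inordK // ltnS cntf_le.
split; last by apply/forallP => m; rewrite E.
by rewrite /is_pattern (eq_bigr _ (fun m _ => E m)) sum_cntf.
Qed.

Lemma sum_perm_out (s : 'I_N -> 'I_M) (t : pattern M N)
  (F : {ffun 'I_N -> 'I_M} -> C) : is_pattern t ->
  \sum_(sg : 'S_N) F [ffun i => out s t (sg i)] =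
  (tfact t)%:R * \sum_(j : {ffun 'I_N -> 'I_M} | [forall m, cntf j m == t m]) F j.
Proof.
move=> ht.
rewrite (partition_big (fun sg : 'S_N => [ffun i => out s t (sg i)]) predT) //=.
rewrite [in RHS]big_mkcond big_distrr /=; apply: eq_bigr => j _.
rewrite (eq_bigr (fun _ => 1 * F j)); last by move=> sg /eqP ->; rewrite mul1r.
rewrite -big_distrl /= (eq_bigr (fun _ => 1%:R)) // -natr_sum.
have -> : (\sum_(sg : 'S_N | [ffun i => out s t (sg i)] == j) 1 =
           \sum_(sg : 'S_N | [forall i, out s t (sg i) == j i]) 1)%N.
  apply: eq_bigl => sg; apply/eqP/forallP => [<- i|H]; first by rewrite ffunE.
  by apply/ffunP => i; rewrite ffunE (eqP (H i)).
rewrite perm_count.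
have -> : [forall m, cntf (out s t) m == cntf j m] = [forall m, cntf j m == t m].
  by apply: eq_forallb => m; rewrite cnt_out // eq_sym.
case: ifP => [/forallP c|_]; last by rewrite mul0r mulr0.
by rewrite /tfact; congr (_%:R * _); apply: eq_bigr => m _; rewrite (eqP (c m)).
Qed.

Lemma sum_patterns (F : {ffun 'I_N -> 'I_M} -> C) :
  \sum_(t : pattern M N | is_pattern t)
     \sum_(j : {ffun 'I_N -> 'I_M} | [forall m, cntf j m == t m]) F j =
  \sum_j F j.
Proof.
rewrite (exchange_big_dep predT) //=; apply: eq_bigr => j _.
by rewrite (eq_bigl _ _ (t0P j)) big_pred1_eq.
Qed.

Lemma reindex_pair (g : 'I_N -> 'I_M) (U : 'M[C]_M) (s : 'I_N -> 'I_M) (sg : 'S_N) :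
  \sum_(tau : 'S_N | tau != sg)
     `|\prod_(j < N) U (g (sg j)) (s j)| * `|\prod_(j < N) U (g (tau j)) (s j)| =
  \sum_(rho : 'S_N | rho != 1%g)
     \prod_(i < N) (`|U (g (sg i)) (s i)| * `|U (g (sg i)) (s (rho i))|).
Proof.
have inj : injective (fun rho : 'S_N => (rho^-1 * sg)%g).
  by move=> x y /mulIg /invg_inj.
rewrite (reindex_inj inj) /=; apply: eq_big => [rho|rho _].
  congr negb; apply/eqP/eqP => [e|->]; last by rewrite invg1 mul1g.
  by apply: invg_inj; rewrite invg1; apply: (mulIg sg); rewrite mul1g.
rewrite !normr_prod [X in _ * X](reindex_inj (@perm_inj _ rho)) -big_split /=.
by apply: eq_bigr => i _; rewrite permM permK.
Qed.


Lemma diff_bound (U : 'M[C]_M) (s : 'I_N -> 'I_M) (t : pattern M N) :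
  `|Pideal U s t - Pdist U s t| <= (tfact t)%:R^-1 *
   \sum_(sg : 'S_N) \sum_(rho : 'S_N | rho != 1%g)
      \prod_(i < N) (`|U (out s t (sg i)) (s i)| * `|U (out s t (sg i)) (s (rho i))|).
Proof.
rewrite /Pideal /Pdist -mulrBr normrM ger0_norm ?invr_ge0 ?ler0n //.
apply: ler_wpM2l; first by rewrite invr_ge0 ler0n.
set a := fun sg : 'S_N => \prod_(j < N) U (out s t (sg j)) (s j).
have Ea (sg : 'S_N) : \prod_(j < N) `|U (out s t (sg j)) (s j)| ^+ 2 = a sg * (a sg)^*.
  by rewrite prodrXl -normr_prod normCK.
rewrite (eq_bigr _ (fun sg _ => Ea sg)) normCK rmorph_sum mulr_suml -sumrB.
apply: le_trans (ler_norm_sum _ _ _) _; apply: ler_sum => sg _.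
rewrite -(reindex_pair (out s t)) mulr_sumr (bigD1 sg) //= /a addrAC subrr add0r.
apply: le_trans (ler_norm_sum _ _ _) _; apply: ler_sum => tau _.
by rewrite normrM norm_conjC.
Qed.

End Main.

Theorem mainTheorem6 (C : numClosedFieldType) (M N : nat)
  (U : 'M[C]_M) (s : 'I_N -> 'I_M) :
  unitary U -> injective s ->
  let rhs1 := 2^-1 * \sum_(j : {ffun 'I_N -> 'I_M})
                \sum_(rho : 'S_N | rho != 1%g)
                  \prod_(i < N) (`| U (j i) (s i) | * `| U (j i) (s (rho i)) |) in
  let rhs2 := 2^-1 * \sum_(I : {set 'I_N} | I != set0)
                \sum_(rho : 'S_N | [forall i, (rho i != i) == (i \in I)])
                  \sum_(j : {ffun 'I_N -> 'I_M})
                    \prod_(i < N) (`| U (j i) (s i) | * `| U (j i) (s (rho i)) |) in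
  [/\ tvd U s <= rhs1, rhs1 = rhs2 &
      tvd U s <= 2^-1 * \sum_(I : {set 'I_N} | I != set0)
                          \prod_(i in I) Ccoef U s i].
Proof.
move=> hU hs rhs1 rhs2.
have h2 : 0 <= (2 : C)^-1 by rewrite invr_ge0 ler0n.
set H := fun j : {ffun 'I_N -> 'I_M} => \sum_(rho : 'S_N | rho != 1%g)
   \prod_(i < N) (`| U (j i) (s i) | * `| U (j i) (s (rho i)) |).
have P1 : tvd U s <= rhs1.
  rewrite /tvd /rhs1; apply: ler_wpM2l => //.
  apply: le_trans (ler_sum _ (fun t ht => diff_bound U s t)) _.
  have E t : is_pattern t -> (tfact t)%:R^-1 *
     \sum_(sg : 'S_N) \sum_(rho : 'S_N | rho != 1%g)
      \prod_(i < N) (`|U (out s t (sg i)) (s i)| * `|U (out s t (sg i)) (s (rho i))|)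
     = \sum_(j : {ffun 'I_N -> 'I_M} | [forall m, cntf j m == t m]) H j.
    move=> ht; rewrite [X in _ * X](eq_bigr (fun sg : 'S_N => H [ffun i => out s t (sg i)])); last first.
      by move=> sg _; rewrite /H; apply: eq_bigr => rho _; apply: eq_bigr => i _; rewrite ffunE.
    rewrite sum_perm_out // mulrA mulVf ?mul1r // pnatr_eq0 -lt0n /tfact.
    by apply: prodn_gt0 => m; apply: fact_gt0.
  by rewrite (eq_bigr _ E) sum_patterns.
have P2 : rhs1 = rhs2.
  rewrite /rhs1 /rhs2; congr (_ * _); rewrite exchange_big /=.
  rewrite (partition_big (fun rho : 'S_N => [set i | rho i != i]) (fun I => I != set0)).
    apply: eq_bigr => I hI; apply: eq_bigl => rho.
    apply/andP/forallP => [[_ /eqP <-] i | HH]; first by rewrite inE.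
    have eI : [set i | rho i != i] = I by apply/setP => i; rewrite inE (eqP (HH i)).
    split; last by rewrite eI.
    apply: contraNneq hI => e; rewrite -eI; apply/eqP/setP => i.
    by rewrite !inE e perm1 eqxx.
  move=> rho; apply: contraNneq => e; apply/eqP/permP => i; rewrite perm1; apply/eqP.
  by have := in_set0 i; rewrite -e inE; case: eqP.
split => //.
apply: le_trans P1 _; rewrite P2 /rhs2; apply: ler_wpM2l => //.
apply: ler_sum => I hI.
set c := fun i l : 'I_N => \sum_(m < M) `|U m (s i)| * `|U m (s l)|.
have cii i : c i i = 1.
  have := congr1 (fun A : 'M[C]_M => A (s i) (s i)) (mulmx1C hU).
  rewrite !mxE eqxx /= => E; apply: (etrans _ E).
  by apply: eq_bigr => m _; rewrite !mxE -expr2 normCK mulrC.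
have c0 i l : 0 <= c i l by apply: sumr_ge0 => m _; rewrite mulr_ge0.
pose d i l : C := if i \in I then (l != i)%:R * c i l else (l == i)%:R.
have d0 i l : 0 <= d i l by rewrite /d; case: ifP => _; rewrite ?mulr_ge0 ?ler0n.
have ER : \prod_(i in I) Ccoef U s i = \sum_(f : {ffun 'I_N -> 'I_N}) \prod_i d i (f i).
  rewrite -bigA_distr_bigA big_mkcond /=; apply: eq_bigr => i _.
  rewrite /d; case: ifP => _.
    rewrite /Ccoef exchange_big /= big_mkcond /=; apply: eq_bigr => l _.
    by case: (l != i); rewrite ?mul1r ?mul0r.
  rewrite (bigD1 i) //= eqxx big1 ?addr0 // => l hl.
  by rewrite (negbTE hl).
rewrite ER.
have EL rho : [forall i, (rho i != i) == (i \in I)] ->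
   \sum_(j : {ffun 'I_N -> 'I_M})
       \prod_(i < N) (`| U (j i) (s i) | * `| U (j i) (s (rho i)) |) =
   \prod_i d i ([ffun i => rho i] i).
  move/forallP => HH.
  rewrite -(bigA_distr_bigA (fun i m => `| U m (s i) | * `| U m (s (rho i)) |)).
  apply: eq_bigr => i _; rewrite ffunE /d -(eqP (HH i)).
  case: eqP => [e|/eqP ne]; last by rewrite /= mul1r.
  by rewrite e; apply: (cii i).
rewrite (eq_bigr (fun rho : 'S_N => \prod_i d i ([ffun i => rho i] i)) EL).
set G := fun f : {ffun 'I_N -> 'I_N} => \prod_i d i (f i).
have G0 f : 0 <= G f by apply: prodr_ge0.
have inj : {in [pred rho : 'S_N | [forall i, (rho i != i) == (i \in I)]] &,
             injective (fun rho : 'S_N => [ffun i => rho i])}.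
  move=> x y _ _ e; apply/permP => i.
  by have := congr1 (fun f : {ffun 'I_N -> 'I_N} => f i) e; rewrite /= !ffunE.
rewrite (eq_bigl (mem [pred rho : 'S_N | [forall i, (rho i != i) == (i \in I)]])) //.
rewrite -(big_imset G inj) /=.
rewrite [X in _ <= X](bigID (mem [set [ffun i => rho i] | rho : 'S_N in [pred rho : 'S_N | [forall i, (rho i != i) == (i \in I)]]])) /=.
rewrite /G lerDl; apply: sumr_ge0 => f _; exact: G0.
Qed.
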